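(* Let $X_1,\dots,X_n$ be i.i.d. with c.d.f. $F$ and mean $\mu$, let $p\geq1$ with $\nu_p<+\infty$. Let $k_1,k_2\in\mathbb{N}$ with $k_1+k_2<n$ and $k_{\min}:=\min\{k_1,k_2\}>0$. Then for any $t>0$, \[\Pr\left(\Delta_{n,k_1,k_2}>t\,\nu_p\left(\frac{n}{k_{\min}}\right)^{1/p}\right)\leq\left(\frac{e\,2^p\,\rho_{F,p}\left(\frac{2^p}{t^p}\frac{k_{\min}}{n}\right)^p}{t^p}\right)^{k_{\min}}.\]
   Context: $\nu_p:=(\mathbb{E}|X_1-\mu|^p)^{1/p}$. With order statistics $X_{(1)}\le\dots\le X_{(n)}$, the $(k_1,k_2)$-width is $\Delta_{n,k_1,k_2}:=X_{(n-k_2+1)}-X_{(k_1)}$. For $\xi>0$, $\rho_{F,p}(\xi):=\sup\{(\mathbb{E}[|X_1-\mu|^pZ])^{1/p}/\nu_p: 0\le Z\le1 \text{ a random variable (jointly defined with }X_1), \mathbb{E}Z\le\xi\}$ if $\nu_p>0$, and $0$ if $\nu_p=0$. *)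

(* Defs.v *)
From HB Require Import structures.
From mathcomp Require Import all_boot all_order all_algebra.
From mathcomp Require Import all_classical all_reals all_analysis.
Set Implicit Arguments. Unset Strict Implicit. Unset Printing Implicit Defensive.
Import Order.TTheory GRing.Theory Num.Theory.
Local Open Scope classical_set_scope.
Local Open Scope ring_scope.

Definition indep_RVs (d : measure_display) (T : measurableType d) (R : realType)
  (P : probability T R) (n : nat) (X : 'I_n -> T -> R) : Prop :=
  forall (S : {set 'I_n}) (B : 'I_n -> set R), (forall i, measurable (B i)) ->
    fine (P (\bigcap_(i in [set i | i \in S]) (X i @^-1` B i)))
    = \prod_(i in S) fine (P (X i @^-1` B i)).

Definition mean (d : measure_display) (T : measurableType d) (R : realType)
  (P : probability T R) (X : T -> R) : R :=
  fine (\int[P]_w (X w)%:E).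

Definition pmoment (d : measure_display) (T : measurableType d) (R : realType)
  (P : probability T R) (X : T -> R) (p : R) : \bar R :=
  (\int[P]_w ((`|X w - mean P X| `^ p)%:E))%E.

Definition nu_p (d : measure_display) (T : measurableType d) (R : realType)
  (P : probability T R) (X : T -> R) (p : R) : R :=
  fine (pmoment P X p) `^ p^-1.

Definition rho (R : realType) (F : R -> R) (p xi : R) : R :=
  sup [set r : R | exists (d : measure_display) (T : measurableType d)
        (P : probability T R) (X Z : T -> R),
     measurable_fun setT X /\ measurable_fun setT Z /\
         (forall x, fine (P [set w | X w <= x]) = F x) /\
         (forall w, 0 <= Z w <= 1) /\
         fine (\int[P]_w (Z w)%:E) <= xi /\
         r = if nu_p P X p == 0 then 0
             else fine (\int[P]_w ((`|X w - mean P X| `^ p * Z w)%:E)) `^ p^-1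
                  / nu_p P X p].

(* j-th order statistic X_(j) (1-indexed) of a sample x of size n *)
Definition order_stat (R : realType) (n : nat) (x : 'I_n -> R) (j : nat) : R :=
  nth 0 (sort <=%R [seq x i | i <- enum 'I_n]) j.-1.

Definition width (R : realType) (n k1 k2 : nat) (x : 'I_n -> R) : R :=
  order_stat x (n - k2 + 1) - order_stat x k1.

(* Main.v *)
Require Import Defs.
From HB Require Import structures.
From mathcomp Require Import all_boot all_order all_algebra.
From mathcomp Require Import all_classical all_reals all_analysis.
From mathcomp Require Import measurable_realfun zify ring lra.
Import Order.TTheory GRing.Theory Num.Theory.
Local Open Scope ring_scope.

Lemma card_count (T : finType) (P : pred T) : #|[set i | P i]| = count P (enum T).
Proof. rewrite cardsE cardE -size_filter. congr size. rewrite /enum_mem. rewrite -filter_predI. apply: eq_filter => x /=. by rewrite andbT. Qed.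

Section OS.
Variables (R : realType) (n : nat) (x : 'I_n -> R).
Let s := sort <=%R [seq x i | i <- enum 'I_n].
Let ss : sorted <=%R s := sort_sorted (@le_total _ R) _.
Let sz : size s = n.
Proof. by rewrite /s size_sort size_map size_enum_ord. Qed.
Let cnt (P : pred R) : #|[set i | P (x i)]| = count P s.
Proof.
rewrite card_count -(count_map x P) /s.
by apply/esym/permP; rewrite perm_sort.
Qed.
Let mono i j : (i <= j < n)%N -> nth 0 s i <= nth 0 s j.
Proof.
move=> /andP[ij jn]; apply: (sorted_leq_nth le_trans lexx) => //; rewrite inE sz //.
exact: leq_ltn_trans ij jn.
Qed.

Lemma order_stat_gt j a : (0 < j <= n)%N ->
  (a < order_stat x j) = (n - j < #|[set i | (a < x i)%R]|)%N.
Proof.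
move=> /andP[j0 jn]; rewrite /order_stat -/s (cnt (fun y => a < y)).
apply/idP/idP => [ha|].
  rewrite -(cat_take_drop j.-1 s) count_cat.
  have -> : count (fun y => a < y) (drop j.-1 s) = size (drop j.-1 s).
    apply/eqP; rewrite -all_count; apply/(all_nthP 0) => k.
    rewrite size_drop sz => kn; rewrite nth_drop.
    apply: (lt_le_trans ha); apply: mono; rewrite leq_addr /=. 
    by rewrite -ltn_subRL.
  rewrite size_drop sz. apply: leq_trans (leq_addl _ _).
  lia.
apply: contraTT; rewrite -!leNgt => ha.
rewrite -(cat_take_drop j s) count_cat.
have -> : count (fun y => a < y) (take j s) = 0%N.
  apply/eqP; rewrite -leqn0 leqNgt -has_count; apply/(has_nthP 0) => -[k].
  rewrite size_take sz.
  move=> kj.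
  have kj' : (k < j)%N by move: kj; case: ifP => //; lia.
  rewrite nth_take //.
  move=> hk; have : nth 0 s k <= a by apply: le_trans ha; apply: mono; apply/andP; split; lia.
  by rewrite leNgt hk.
rewrite add0n -leqNgt; apply: leq_trans (count_size _ _) _; rewrite size_drop sz; lia.
Qed.

Lemma order_stat_lt j a : (0 < j <= n)%N -> order_stat x j < a ->
  (j <= #|[set i | (x i < a)%R]|)%N.
Proof.
move=> /andP[j0 jn] ha; rewrite (cnt (fun y => y < a)).
rewrite -(cat_take_drop j s) count_cat.
apply: leq_trans (leq_addr _ _).
have -> : count (fun y => y < a) (take j s) = size (take j s).
  apply/eqP; rewrite -all_count; apply/(all_nthP 0) => k.
  rewrite size_take sz => kj.
  have kj' : (k < j)%N by move: kj; case: ifP => //; lia.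
  rewrite nth_take //; apply: le_lt_trans ha; apply: mono.
  apply/andP; split; lia.
by rewrite size_take sz; case: ifP => // /negbT; lia.
Qed.
End OS.

Local Open Scope classical_set_scope.
Local Open Scope ring_scope.

Lemma order_stat_measurable (d : measure_display) (T : measurableType d) (R : realType) n
  (X : 'I_n -> T -> R) j : (forall i, measurable_fun setT (X i)) -> (0 < j <= n)%N ->
  measurable_fun setT (fun w => order_stat (fun i => X i w) j).
Proof.
move=> mX jn.
apply: (measurability (@RGenOInfty.G R)) => [|_ [_ [a ->] <-]].
  exact: RGenOInfty.measurableE.
rewrite setTI.
have -> : (fun w => order_stat (fun i => X i w) j) @^-1` `]a, +oo[ =
  \bigcup_(A in [set A : {set 'I_n} | (n - j < #|A|)%N])
     \bigcap_(i in [set i | i \in A]) (X i @^-1` `]a, +oo[).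
  apply/seteqP; split => w /=.
    rewrite in_itv /= andbT order_stat_gt // => h.
    exists ([set i | a < X i w])%SET; first exact: h.
    move=> i /=; rewrite inE => ai.
    by rewrite in_itv /= ai.
  move=> [A /= hA hi]; rewrite in_itv /= andbT order_stat_gt //.
  apply: leq_trans hA _; apply: subset_leq_card; apply/fintype.subsetP => i iA.
  by rewrite inE; have := hi i iA; rewrite /= in_itv /= andbT.
apply: fin_bigcup_measurable; first exact: finite_finset.
move=> A _; apply: fin_bigcap_measurable; first exact: finite_finset.
move=> i _; rewrite -[X in measurable X]setTI.
by apply: (mX i) => //; exact: measurable_itv.
Qed.

Lemma mean_eq_cdf (d : measure_display) (T : measurableType d) (R : realType)
  (P : probability T R) (X Y : T -> R) :
  measurable_fun setT X -> measurable_fun setT Y ->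
  P.-integrable setT (EFin \o X) -> P.-integrable setT (EFin \o Y) ->
  (forall x, P [set w | X w <= x] = P [set w | Y w <= x]) -> mean P X = mean P Y.
Proof.
move=> mX mY iX iY hXY.
pose X' : {RV P >-> R} := HB.pack X (isMeasurableFun.Build _ _ _ _ _ mX).
pose Y' : {RV P >-> R} := HB.pack Y (isMeasurableFun.Build _ _ _ _ _ mY).
have hc r : cdf X' r = cdf Y' r.
  rewrite /cdf /distribution /pushforward /=.
  have E (Z : T -> R) : Z @^-1` `]-oo, r] = [set w | Z w <= r].
    by apply/seteqP; split => w /=; rewrite in_itv.
  by rewrite !E hXY.
have hcc r : ccdf X' r = ccdf Y' r.
  rewrite !ccdf_1_cdf. by rewrite hc.
rewrite /mean.
have -> : (\int[P]_w (X w)%:E)%E = ('E_P[X'])%E by rewrite expectation_def.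
have -> : (\int[P]_w (Y w)%:E)%E = ('E_P[Y'])%E by rewrite expectation_def.
rewrite !expectation_cdf_ccdf; first last.
- by apply/Lfun1_integrable.
- by apply/Lfun1_integrable.
congr (fine (_ - _))%E; apply: eq_integral => r _; [exact: hcc | exact: hc].
Qed.

Lemma union_bound (d : measure_display) (T : measurableType d) (R : realType)
  (P : probability T R) (I : finType) (L : seq I) (B : I -> set T) :
  (forall i, measurable (B i)) ->
  (P (\bigcup_(i in [set i | i \in L]) B i) <= \sum_(i <- L) P (B i))%E.
Proof.
move=> mB; elim: L => [|a L IH].
  rewrite big_nil (_ : [set i | i \in [::]] = set0) ?bigcup_set0 ?measure0 //.
  by apply/seteqP; split => i //=.
rewrite big_cons.
have -> : [set i | i \in a :: L] = a |` [set i | i \in L].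
  apply/seteqP; split => i /=; rewrite inE.
    by case/orP => [/eqP ->|h]; [left|right].
  by case => [->|h]; rewrite ?eqxx // h orbT.
rewrite bigcup_setU1.
apply: le_trans (measureU2 _ _ _) _ => //.
  apply: fin_bigcup_measurable => //; exact: finite_finset.
by apply: leeD.
Qed.

Lemma sub_card (T : finType) (A : {set T}) k : (k <= #|A|)%N ->
  exists2 S : {set T}, S \subset A & #|S| = k.
Proof.
move=> kA; exists [set x in take k (enum A)].
  apply/fintype.subsetP => x; rewrite inE => /mem_take; by rewrite mem_enum.
have u : uniq (take k (enum A)) by apply: take_uniq; exact: enum_uniq.
rewrite cardsE (card_uniqP u) size_take -cardE; case: ltnP => // h; lia.
Qed.

Lemma core (d : measure_display) (T : measurableType d) (R : realType)
  (P : probability T R) n (A : 'I_n -> set T) (k : nat) (Q : R) (E : set T) :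
  (forall i, measurable (A i)) ->
  (forall S : {set 'I_n}, fine (P (\bigcap_(i in [set i | i \in S]) A i)) = \prod_(i in S) fine (P (A i))) ->
  (forall i, fine (P (A i)) <= Q) -> measurable E ->
  E `<=` \bigcup_(S in [set S : {set 'I_n} | #|S| == k]) \bigcap_(i in [set i | i \in S]) A i ->
  (P E <= ('C(n,k)%:R * Q ^+ k)%:E)%E.
Proof.
move=> mA hind hQ mE hE.
set L := enum [set S : {set 'I_n} | #|S| == k]%SET.
have mI (S : {set 'I_n}) : measurable (\bigcap_(i in [set i | i \in S]) A i).
  by apply: fin_bigcap_measurable => //; exact: finite_finset.
apply: le_trans (le_measure _ _ _ hE) _; rewrite ?inE //.
  by apply: fin_bigcup_measurable => //; exact: finite_finset.
have -> : [set S : {set 'I_n} | #|S| == k] = [set S | S \in L].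
  by apply/seteqP; split => S /=; rewrite /L mem_enum inE.
apply: le_trans (@union_bound _ _ _ P _ L _ mI) _.
apply: (@le_trans _ _ (\sum_(S <- L) (Q ^+ k)%:E)%E).
  rewrite big_seq [X in (_ <= X)%E]big_seq.
  apply: lee_sum => S SL.
  have hS : #|S| = k by move: SL; rewrite /L mem_enum inE => /eqP.
  rewrite -(fineK (fin_num_measure P _ (mI S))) lee_fin hind -hS -prodr_const.
  apply: ler_prod => i _; rewrite fine_ge0 ?measure_ge0 //= hQ.
rewrite sumEFin lee_fin /L big_enum /= sumr_const card_draws card_ord.
by rewrite mulr_natl.
Qed.

Lemma binom_bound (R : realType) n k : (0 < n)%N -> (0 < k)%N ->
  'C(n,k)%:R * (k%:R / n%:R) ^+ k <= expR 1 ^+ k :> R.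
Proof.
move=> n0 k0.
have h1 : ('C(n,k) * k`! <= n ^ k)%N.
  rewrite bin_ffact ffact_prod.
  apply: (@leq_trans (\prod_(i < k) n)%N).
    by apply: leq_prod => i _; exact: leq_subr.
  by rewrite prod_nat_const card_ord.
have h2 : k%:R ^+ k / k`!%:R <= expR (k%:R) :> R.
  have := @expR_ge1Dxn R k%:R k.-1 (ler0n _ k); rewrite prednK // => h.
  by apply: le_trans h; rewrite lerDr.
rewrite -expRM_natl mulr1; apply: le_trans h2.
have nk0 : 0 < n%:R ^+ k :> R by rewrite exprn_gt0 // ltr0n.
have f0 : 0 < k`!%:R :> R by rewrite ltr0n fact_gt0.
have K0 : 0 < k%:R ^+ k :> R by rewrite exprn_gt0 // ltr0n.
rewrite expr_div_n mulrA ler_pdivrMr // mulrAC ler_pdivlMr // mulrAC [_ * n%:R ^+ k]mulrC.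
rewrite ler_pM2r //.
by rewrite -natrM -natrX ler_nat.
Qed.

Section rho_lemmas.
Context (d : measure_display) (T : measurableType d) (R : realType) (P : probability T R).

Lemma mpow (X : T -> R) (m p : R) : measurable_fun setT X ->
  measurable_fun setT (fun w => `|X w - m| `^ p).
Proof.
move=> mX.
have h1 : measurable_fun setT (fun w => X w - m).
  by apply: measurable_funB => //; exact: measurable_cst.
have h2 : measurable_fun setT (fun w => `|X w - m|).
  exact: (measurableT_comp (@normr_measurable R setT) h1).
exact: (measurableT_comp (measurable_powR p) h2).
Qed.

Lemma int_le_pm (X Z : T -> R) (p : R) : measurable_fun setT X -> measurable_fun setT Z ->
  (forall w, 0 <= Z w <= 1) ->
  (0 <= \int[P]_w ((`|X w - mean P X| `^ p * Z w)%:E) <= pmoment P X p)%E.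
Proof.
move=> mX mZ hZ; apply/andP; split.
  apply: integral_ge0 => w _; rewrite lee_fin mulr_ge0 ?powR_ge0 //.
  by case/andP: (hZ w).
apply: ge0_le_integral => //.
- by move=> w _; rewrite lee_fin mulr_ge0 ?powR_ge0 //; case/andP: (hZ w).
- apply/measurable_EFinP; apply: measurable_funM => //; exact: mpow.
- apply/measurable_EFinP; exact: mpow.
move=> w _; rewrite lee_fin; case/andP: (hZ w) => _ z1.
by rewrite ler_piMr ?powR_ge0.
Qed.


End rho_lemmas.

Lemma rho_ge (d : measure_display) (T : measurableType d) (R : realType) (P : probability T R) (F : R -> R) (p xi : R) (X Z : T -> R) : 0 < p ->
  measurable_fun setT X -> measurable_fun setT Z ->
  (forall x, fine (P [set w | X w <= x]) = F x) -> (forall w, 0 <= Z w <= 1) ->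
  fine (\int[P]_w (Z w)%:E)%E <= xi -> nu_p P X p != 0 ->
  fine (\int[P]_w ((`|X w - mean P X| `^ p * Z w)%:E))%E `^ p^-1 / nu_p P X p <= rho F p xi.
Proof.
move=> p0 mX mZ hF hZ hxi hnu.
rewrite /rho; set S := (X in sup X).
have hr : S (fine (\int[P]_w ((`|X w - mean P X| `^ p * Z w)%:E))%E `^ p^-1 / nu_p P X p).
  by hnf; exists d, T, P, X, Z; do 5 (split => //); rewrite (negbTE hnu).
apply: (sup_upper_bound _ hr); split; first by eexists; exact: hr.
exists 1 => _ [d' [T' [P' [X' [Z' [mX' [mZ' [_ [hZ' [_ ->]]]]]]]]]].
case: ifP => [_|/negbT hnu']; first exact: ler01.
have nu0 : 0 < nu_p P' X' p by rewrite lt_def hnu' powR_ge0.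
rewrite ler_pdivrMr // mul1r.
have /andP[I0 Ipm] := @int_le_pm _ _ _ P' _ _ p mX' mZ' hZ'.
have pmoo : (pmoment P' X' p < +oo)%E.
  rewrite ltNge leye_eq; apply/negP => /eqP hoo.
  by move: hnu'; rewrite /nu_p hoo /= powR0 ?eqxx // invr_eq0 gt_eqF.
have pm0 : (0 <= pmoment P' X' p)%E := le_trans I0 Ipm.
rewrite /nu_p; apply: ge0_ler_powR.
- by rewrite invr_ge0 ltW.
- by rewrite nnegrE fine_ge0.
- by rewrite nnegrE fine_ge0.
apply: fine_le => //.
  by rewrite ge0_fin_numE // (le_lt_trans Ipm).
by rewrite ge0_fin_numE.
Qed.

Lemma qbound (d : measure_display) (T : measurableType d) (R : realType)
  (P : probability T R) (X : T -> R) (F : R -> R) (p nu t N K : R) :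
  measurable_fun setT X -> (forall x, fine (P [set w | X w <= x]) = F x) ->
  1 <= p -> (pmoment P X p < +oo)%E -> nu_p P X p = nu -> 0 < N -> 0 < K -> 0 < t ->
  fine (P [set w | t * nu * ((N / K) `^ p^-1) / 2 < `|X w - mean P X|]) <=
  K / N * (2 `^ p * rho F p (2 `^ p / t `^ p * (K / N)) `^ p / t `^ p).
Proof.
move=> mX hF p1 pmoo hnu N0 K0 t0.
have p0 : 0 < p by apply: lt_le_trans p1; exact: ltr01.
set mu := mean P X.
set s := t * nu * ((N / K) `^ p^-1) / 2.
set A := [set w | s < `|X w - mu|].
set rh := rho F p _.
have h2 : measurable_fun setT (fun w => `|X w - mu|).
  have h1 : measurable_fun setT (fun w => X w - mu).
    by apply: measurable_funB => //; exact: measurable_cst.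
  exact: (measurableT_comp (@normr_measurable R setT) h1).
have mA : measurable A.
  have := h2 measurableT _ (measurable_itv `]s, +oo[); rewrite setTI.
  by congr measurable; apply/seteqP; split => w /=; rewrite in_itv /= andbT.
have pm0 : (0 <= pmoment P X p)%E.
  by apply: integral_ge0 => w _; rewrite lee_fin powR_ge0.
set M := fine (pmoment P X p).
have M0 : 0 <= M by rewrite fine_ge0.
have pmE : pmoment P X p = M%:E by rewrite fineK // ge0_fin_numE.
have nuE : nu = M `^ p^-1 by rewrite -hnu.
have Mnu : M = nu `^ p by rewrite nuE -powRrM mulVf ?gt_eqF // powRr1.
have q0 : 0 <= fine (P A) by rewrite fine_ge0.
have rhs0 : 0 <= K / N * (2 `^ p * rh `^ p / t `^ p).
  by rewrite !mulr_ge0 ?invr_ge0 ?powR_ge0 ?ltW.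
have [nu0|nu0] := eqVneq nu 0.
  have M00 : M = 0 by rewrite Mnu nu0 powR0 // gt_eqF.
  suff -> : P A = 0%E by [].
  have hae : ae_eq P setT (fun w => (`|X w - mu| `^ p)%:E) (cst 0%E).
    apply/ae_eq_integral_abs => //.
      apply/measurable_EFinP; exact: mpow.
    rewrite -[RHS](_ : pmoment P X p = 0%E); last by rewrite pmE M00.
    by apply: eq_integral => w _; rewrite gee0_abs // lee_fin powR_ge0.
  case: hae => B [mB PB0 sB].
  apply: (subset_measure0 mA mB _ PB0) => w Aw; apply: sB => /= h.
  have := h I; move/eqP; rewrite eqe powR_eq0 (gt_eqF p0) andbT normr_eq0 => /eqP hw.
  by move: Aw; rewrite /A /= hw /s nu0 !(mulr0, mul0r) normr0 ltxx.
have nup : 0 < nu by rewrite lt_def nu0 nuE powR_ge0.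
have Mp : 0 < M by rewrite Mnu powR_gt0.
have sp : 0 < s by rewrite /s !mulr_gt0 ?invr_gt0 ?powR_gt0 ?divr_gt0 ?ltr0n.
pose Z : T -> R := \1_A.
have mZ : measurable_fun setT Z by exact: measurable_indic.
have hZ w : 0 <= Z w <= 1 by rewrite /Z indicE; case: (w \in A); rewrite ?lexx ?ler01.
have EZ : (\int[P]_w (Z w)%:E)%E = P A by rewrite integral_indic // setIT.
have PAE : P A = (fine (P A))%:E by rewrite fineK // fin_num_measure.
set Ig := (\int[P]_w ((`|X w - mu| `^ p * Z w)%:E))%E.
have /andP[I0 Ipm] := @int_le_pm _ _ _ P _ _ p mX mZ hZ.
have Ifin : Ig \is a fin_num by rewrite ge0_fin_numE // (le_lt_trans Ipm).
have IM : fine Ig <= M by apply: fine_le => //; rewrite ge0_fin_numE.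
have I0' : 0 <= fine Ig by rewrite fine_ge0.
have ha : s `^ p * fine (P A) <= fine Ig.
  have : ((\int[P]_w ((s `^ p * Z w)%:E)) <= Ig)%E.
    apply: ge0_le_integral => //.
    - by move=> w _; rewrite lee_fin mulr_ge0 ?powR_ge0 //; case/andP: (hZ w).
    - by apply/measurable_EFinP; apply: measurable_funM => //; exact: measurable_cst.
    - by apply/measurable_EFinP; apply: measurable_funM => //; exact: mpow.
    move=> w _; rewrite lee_fin /Z indicE; case: (boolP (w \in A)) => wA; last by rewrite !mulr0.
    rewrite !mulr1; move: wA; rewrite inE /= => wA.
    by apply: (ge0_ler_powR (ltW p0)) (ltW wA); rewrite nnegrE // ltW.
  have eqI : (\int[P]_w ((s `^ p * Z w)%:E) = (s `^ p)%:E * P A)%E.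
    under eq_integral do rewrite EFinM.
    rewrite ge0_integralZl_EFin //; last 3 first.
    - by move=> w _; rewrite lee_fin; case/andP: (hZ w).
    - by apply/measurable_EFinP.
    - exact: powR_ge0.
    by rewrite EZ.
  by rewrite eqI PAE -EFinM -(fineK Ifin) lee_fin.
have sE : s `^ p = t `^ p * M * (N / K) / 2 `^ p.
  have c0 : 0 <= (N / K) `^ p^-1 := powR_ge0 _ _.
  have t0' : 0 <= t := ltW t0.
  have nu0' : 0 <= nu := ltW nup.
  have NK : 0 <= N / K by rewrite divr_ge0 // ltW.
  have i2 : 0 <= 2^-1 :> R by rewrite invr_ge0 ler0n.
  rewrite /s (powRM _ (mulr_ge0 (mulr_ge0 t0' nu0') c0) i2).
  rewrite (powRM _ (mulr_ge0 t0' nu0') c0) (powRM _ t0' nu0').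
  rewrite -powRrM mulVf ?gt_eqF // (powRr1 NK) -Mnu.
  rewrite -[2^-1](powR_inv1 (ler0n _ 2)) powRAC powR_inv1 ?powR_ge0 //.
have spp : 0 < s `^ p by rewrite powR_gt0.
have hxi : fine (\int[P]_w (Z w)%:E)%E <= 2 `^ p / t `^ p * (K / N).
  rewrite EZ.
  have : s `^ p * fine (P A) <= M := le_trans ha IM.
  rewrite mulrC -ler_pdivlMr // => h; apply: le_trans h _.
  rewrite sE le_eqVlt; apply/orP; left; apply/eqP.
  have t2 : t `^ p != 0 by rewrite gt_eqF // powR_gt0.
  have two : 2 `^ p != 0 :> R by rewrite gt_eqF // powR_gt0.
  field.
  by rewrite t2 two (gt_eqF Mp) (gt_eqF N0) (gt_eqF K0).
have hnu0 : nu_p P X p != 0 by rewrite hnu.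
have hr := @rho_ge _ _ _ P F p _ X Z p0 mX mZ hF hZ hxi hnu0.
rewrite hnu -/rh in hr.
have rh0 : 0 <= rh by apply: le_trans hr; rewrite divr_ge0 ?powR_ge0 ?ltW.
have hI : fine Ig <= rh `^ p * M.
  move: hr; rewrite ler_pdivrMr // => hr.
  have := ge0_ler_powR (ltW p0) _ _ hr.
  rewrite -powRrM mulVf ?gt_eqF // powRr1 //.
  rewrite (powRM _ rh0 (ltW nup)) -Mnu => h; apply: h.
    by rewrite nnegrE powR_ge0.
  by rewrite nnegrE mulr_ge0 // ltW.
have : s `^ p * fine (P A) <= rh `^ p * M := le_trans ha hI.
rewrite mulrC -ler_pdivlMr // => h; apply: le_trans h _.
rewrite sE le_eqVlt; apply/orP; left; apply/eqP.
have t2 : t `^ p != 0 by rewrite gt_eqF // powR_gt0.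
have two : 2 `^ p != 0 :> R by rewrite gt_eqF // powR_gt0.
field.
by rewrite t2 two (gt_eqF Mp) (gt_eqF N0) (gt_eqF K0).
Qed.

Theorem proposition4p5 (R : realType) (d : measure_display) (T : measurableType d)
  (P : probability T R) (n : nat) (X : 'I_n -> T -> R) (F : R -> R)
  (p nu t : R) (k1 k2 : nat) :
  (forall i, measurable_fun setT (X i)) ->
  indep_RVs P X ->
  (forall i x, fine (P [set w | X i w <= x]) = F x) ->
  (forall i, P.-integrable setT (EFin \o X i)) ->
  1 <= p ->
  (forall i, (pmoment P (X i) p < +oo)%E) ->
  (forall i, nu_p P (X i) p = nu) ->
  (k1 + k2 < n)%N -> (0 < minn k1 k2)%N ->
  0 < t ->
  (P [set w | (t * nu * ((n%:R / (minn k1 k2)%:R) `^ p^-1) < width k1 k2 (fun i => X i w))%R]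
   <= ((expR 1 * 2 `^ p * (rho F p (2 `^ p / t `^ p * ((minn k1 k2)%:R / n%:R))) `^ p
        / t `^ p) ^+ minn k1 k2)%:E)%E.
Proof.
move=> mX hind hF hint p1 hpm hnu hn hk t0.
set k := minn k1 k2.
have k1p : (0 < k1)%N by move: hk; rewrite /k; lia.
have k2p : (0 < k2)%N by move: hk; rewrite /k; lia.
have n0 : (0 < n)%N by lia.
pose i0 : 'I_n := Ordinal n0.
set mu := mean P (X i0).
have mle i x : measurable [set w | X i w <= x].
  have := mX i measurableT _ (measurable_itv `]-oo, x]); rewrite setTI.
  by congr measurable; apply/seteqP; split => w /=; rewrite in_itv.
have hmean i : mean P (X i) = mu.
  apply: mean_eq_cdf => // x.
  rewrite -(fineK (fin_num_measure P _ (mle i x))) -(fineK (fin_num_measure P _ (mle i0 x))).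
  by rewrite !hF.
set N : R := n%:R.
set K : R := k%:R.
have N0 : 0 < N by rewrite ltr0n.
have K0 : 0 < K by rewrite ltr0n.
set c := t * nu * ((N / K) `^ p^-1).
set s := c / 2.
set B := [set y : R | s < `|y - mu|].
have mB : measurable B.
  have h1 : measurable_fun setT (fun y : R => y - mu).
    by apply: measurable_funB => //; exact: measurable_cst.
  have h2 : measurable_fun setT (fun y : R => `|y - mu|).
    exact: (measurableT_comp (@normr_measurable R setT) h1).
  have := h2 measurableT _ (measurable_itv `]s, +oo[); rewrite setTI.
  by congr measurable; apply/seteqP; split => w /=; rewrite in_itv /= andbT.
pose A i := X i @^-1` B.
have mA i : measurable (A i) by rewrite -[A i]setTI; exact: (mX i).
set rh := rho F p _.
set Q := K / N * (2 `^ p * rh `^ p / t `^ p).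
have hQ i : fine (P (A i)) <= Q.
  have := @qbound _ _ _ P (X i) F p nu t N K (mX i) (hF i) p1 (hpm i) (hnu i) N0 K0 t0.
  by rewrite hmean.
have hind' (S : {set 'I_n}) : fine (P (\bigcap_(i in [set i | i \in S]) A i)) = \prod_(i in S) fine (P (A i)).
  exact: (hind S (fun _ => B) (fun _ => mB)).
set E := [set w | _ < width k1 k2 (fun i => X i w)].
have jhi : (0 < n - k2 + 1 <= n)%N by apply/andP; split; lia.
have jlo : (0 < k1 <= n)%N by apply/andP; split; lia.
have mE : measurable E.
  have mw : measurable_fun setT (fun w => width k1 k2 (fun i => X i w)).
    apply: measurable_funB; exact: order_stat_measurable.
  have := mw measurableT _ (measurable_itv `]c, +oo[); rewrite setTI.
  by congr measurable; apply/seteqP; split => w /=; rewrite in_itv /= andbT.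
have hE : E `<=` \bigcup_(S in [set S : {set 'I_n} | #|S| == k]) \bigcap_(i in [set i | i \in S]) A i.
  move=> w; rewrite /E /= /width => hw.
  set hi := order_stat _ (n - k2 + 1) in hw.
  set lo := order_stat _ k1 in hw.
  have [hhi|hhi] := ltP (mu + s) hi.
    have := hhi; rewrite /hi order_stat_gt // => hc.
    have [S Ssub Sk] : exists2 S : {set 'I_n}, S \subset [set i | mu + s < X i w]%SET & #|S| = k.
      apply: sub_card; apply: leq_trans hc; rewrite /k; lia.
    exists S; first by rewrite /= Sk.
    move=> i /= iS; rewrite /A /B /=.
    have := fintype.subsetP Ssub i iS; rewrite inE => hx.
    apply: lt_le_trans (ler_norm _); lra.
  have hlo : lo < mu - s.
    rewrite ltNge; apply/negP => hl; move: hw; apply/negP; rewrite -leNgt.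
    have -> : c = (mu + s) - (mu - s) by rewrite /s; field.
    exact: lerB.
  have hc := @order_stat_lt R n (fun i => X i w) k1 (mu - s) jlo hlo.
  have [S Ssub Sk] : exists2 S : {set 'I_n}, S \subset [set i | X i w < mu - s]%SET & #|S| = k.
    apply: sub_card; apply: leq_trans hc; rewrite /k; lia.
  exists S; first by rewrite /= Sk.
  move=> i /= iS; rewrite /A /B /=.
  have := fintype.subsetP Ssub i iS; rewrite inE => hx.
  rewrite distrC; apply: lt_le_trans (ler_norm _); lra.
have := @core _ _ _ P n A k Q E mA hind' hQ mE hE.
move=> h; apply: le_trans h _; rewrite lee_fin.
have kp : (0 < k)%N by [].
have hb := @binom_bound R n k n0 kp.
have Y0 : 0 <= (2 `^ p * rh `^ p / t `^ p) ^+ k.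
  by rewrite exprn_ge0 // mulr_ge0 ?invr_ge0 ?mulr_ge0 ?powR_ge0.
rewrite /Q exprMn mulrA.
apply: le_trans (ler_wpM2r Y0 hb) _.
by rewrite -exprMn !mulrA.
Qed.
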